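(* Let $G=(V,E)$ be a $2$-edge-strongly biconnected directed graph with $n=|V|$, and let $U\subseteq E$ be an optimal solution of the minimum $2$-edge-strongly biconnected spanning subgraph problem on $G$, i.e. $U$ is a minimum-size subset of $E$ such that $(V,U)$ is $2$-edge-strongly biconnected. Then $(V,U)$ has at least $2n$ edges.
   Context: A directed graph is strongly biconnected if it is strongly connected and its underlying undirected graph (ignoring edge directions) is biconnected. A strongly biconnected directed graph $G=(V,E)$ is $2$-edge-strongly biconnected if it has at least three vertices and $(V,E\setminus\{e\})$ is strongly biconnected for every $e\in E$. *)

(* Defs.v *)
From mathcomp Require Import all_boot.
Set Implicit Arguments. Unset Strict Implicit. Unset Printing Implicit Defensive.

(* A directed graph on the finite vertex type V is given by its edge set
   E : {set V * V}; the pair (x, y) is the edge x -> y. *)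

Definition darc (V : finType) (E : {set V * V}) : rel V :=
  fun x y => (x, y) \in E.

Definition uarc (V : finType) (E : {set V * V}) : rel V :=
  fun x y => ((x, y) \in E) || ((y, x) \in E).

Definition strongly_connected (V : finType) (E : {set V * V}) : Prop :=
  forall x y : V, connect (darc E) x y.

Definition uconnected (V : finType) (E : {set V * V}) : Prop :=
  forall x y : V, connect (uarc E) x y.

Definition uarc_del (V : finType) (E : {set V * V}) (v : V) : rel V :=
  fun x y => [&& x != v, y != v & uarc E x y].

Definition biconnected (V : finType) (E : {set V * V}) : Prop :=
  uconnected E /\
  forall v x y : V, x != v -> y != v -> connect (uarc_del E v) x y.

Definition strongly_biconnected (V : finType) (E : {set V * V}) : Prop :=
  strongly_connected E /\ biconnected E.

Definition two_edge_strongly_biconnected (V : finType) (E : {set V * V}) : Prop :=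
  [/\ strongly_biconnected E, 3 <= #|V| & forall e, e \in E -> strongly_biconnected (E :\ e)].

(* Main.v *)
Require Import Defs.
From mathcomp Require Import all_boot.
Set Implicit Arguments. Unset Strict Implicit.

Lemma first_step (T : finType) (r : rel T) x y :
  connect r x y -> x != y -> exists z, r x z && (z != x).
Proof.
move=> /connectP [p]; elim: p x => [|z p IH] x /=; first by move=> _ ->; rewrite eqxx.
case/andP=> rxz pz ey nxy.
case: (eqVneq z x) => [ezx|nzx]; last by exists z; rewrite rxz nzx.
subst z; exact: (IH x pz ey nxy).
Qed.

Lemma out_nonempty (V : finType) (F : {set V * V}) v :
  3 <= #|V| -> strongly_connected F ->
  exists z, ((v, z) \in F) && (z != v).
Proof.
move=> h3 sc.
have [y yv] : exists y, y != v.
  have : 1 < #|[set~ v]| by rewrite cardsC1; case: #|V| h3 => // [[|[|n]]].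
  case/card_gt1P => y [z [yin _ _]]; exists y; by rewrite in_setC1 in yin.
have [z hz] := @first_step _ _ _ _ (sc v y) ltac:(by rewrite eq_sym); by exists z.
Qed.

Definition out (V : finType) (U : {set V * V}) v :=
  [set e in U | (e.1 == v) && (e.2 != v)].

Lemma out_ge2 (V : finType) (U : {set V * V}) v :
  two_edge_strongly_biconnected U -> 2 <= #|out U v|.
Proof.
case=> [[sc _] h3 he].
have [z /andP [zin zv]] := out_nonempty v h3 sc.
have [sc' _] := he _ zin.
have [w /andP [win wv]] := out_nonempty v h3 sc'.
rewrite in_setD1 in win; case/andP: win => wne win.
apply/card_gt1P; exists (v, z), (v, w); split => //.
- by rewrite inE zin /= eqxx zv.
- by rewrite inE win /= eqxx wv.
- by rewrite eq_sym.
Qed.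

Lemma sum_out (V : finType) (U : {set V * V}) :
  \sum_(v : V) #|out U v| <= #|U|.
Proof.
have -> : \sum_(v : V) #|out U v| =
  \sum_(v : V) \sum_(e in U) ((e.1 == v) && (e.2 != v) : nat).
  apply: eq_bigr => v _; rewrite -sum1_card /out.
  rewrite (big_mkcond (fun e => e \in _)) [RHS]big_mkcond; apply: eq_bigr => e _.
  by rewrite inE; case: (e \in U) => //=; case: (_ && _).
rewrite exchange_big -sum1_card; apply: leq_sum => e _.
rewrite (bigD1 e.1) //= big1 ?addn0; first by rewrite eqxx; case: (_ != _).
by move=> v /negbTE nv; rewrite eq_sym nv.
Qed.

Theorem mainTheorem3 (V : finType) (E U : {set V * V}) :
  two_edge_strongly_biconnected E ->
  U \subset E ->
  two_edge_strongly_biconnected U ->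
  (forall U' : {set V * V}, U' \subset E -> two_edge_strongly_biconnected U' ->
     #|U| <= #|U'|) ->
  2 * #|V| <= #|U|.
Proof.
move=> _ _ hU _.
apply: leq_trans (sum_out U).
rewrite mulnC -sum_nat_const; apply: leq_sum => v _; exact: out_ge2.
Qed.
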